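(* Let $S=\{(x_i,y_i)\}_{i=1}^n$ be a training set, $\{f_\theta\}$ a parameterized family of classifiers, and $\hat\theta\in\arg\min_\theta L_{\textrm{close-}1}(\{\ell(y_i,f_\theta(x_i))\}_{i=1}^n)$. Then $$\min_\theta L_{0-1}(\{(y_i,f_\theta(x_i))\}_{i=1}^n)=L_{0-1}(\hat\theta),$$ where $L_{0-1}(\theta)$ denotes the number of training examples misclassified by $f_\theta$.
   Context: Binary classification with labels $y\in\{-1,+1\}$ and real-valued predictions. An individual loss $\ell(y,f(x))\ge 0$ comes with a threshold $T$ such that an example is correctly classified iff its individual loss is below $T$. Given individual losses $\ell_1,\dots,\ell_n$, let $\ell_{[i]}$ be the individual loss with the $i$-th smallest value of $|\ell_j-T|$. For a constant $M$ at least as large as every individual loss that occurs, the close-$k$ aggregate loss is $L_{\textrm{close-}k}(\{\ell_i\})=\sum_{i=1}^n c_i$ with $c_i=\ell_{[i]}$ if $i\le k$, $c_i=0$ if $i>k$ and $\ell_{[i]}$ is correctly classified, and $c_i=M$ if $i>k$ and $\ell_{[i]}$ is incorrectly classified; here $k=1$. *)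

(* Defs.v *)
From HB Require Import structures.
From mathcomp Require Import all_boot all_order all_algebra.
Set Implicit Arguments. Unset Strict Implicit. Unset Printing Implicit Defensive.
Import Order.TTheory GRing.Theory Num.Theory.
Local Open Scope ring_scope.

Section CloseK.
Variable R : realFieldType.

Definition sort_by_dist (T : R) (ls : seq R) : seq R :=
  sort (fun a b => `|a - T| <= `|b - T|) ls.

(* close-k aggregate loss: the i-th closest loss l_[i] (0-based index i)
   contributes l_[i] if i < k; otherwise 0 if it is correctly classified
   (l_[i] < T) and M if it is incorrectly classified. *)
Definition close_k_loss (T M : R) (k : nat) (ls : seq R) : R :=
  let s := sort_by_dist T ls in
  \sum_(i < size s) (if (i < k)%N then s`_i else if s`_i < T then 0 else M).

Definition losses (X Theta : Type) (n : nat) (x : 'I_n -> X) (y : 'I_n -> R)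
  (f : Theta -> X -> R) (l : R -> R -> R) (th : Theta) : seq R :=
  [seq l (y i) (f th (x i)) | i <- enum 'I_n].

Definition L01 (X Theta : Type) (n : nat) (x : 'I_n -> X) (y : 'I_n -> R)
  (f : Theta -> X -> R) (th : Theta) : nat :=
  #|[set i : 'I_n | ~~ (0 < y i * f th (x i))]|.

End CloseK.

(* Main.v *)
Require Import Defs.
From HB Require Import structures.
From mathcomp Require Import all_boot all_order all_algebra.
From mathcomp Require Import lra zify.
Import Order.TTheory GRing.Theory Num.Theory.
Local Open Scope ring_scope.

Lemma close1_decomp (R : realFieldType) (T M : R) (ls : seq R) :
  (0 < size ls)%N ->
  exists s0, s0 \in ls /\
    close_k_loss T M 1 ls =
    \sum_(v <- ls) (if v < T then 0 else M) + (s0 - (if s0 < T then 0 else M)).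
Proof.
move=> hs.
rewrite /close_k_loss.
have hp : perm_eq (sort (fun a b : R => (`|a - T| <= `|b - T|)%R) ls) ls.
  by rewrite (perm_sort (fun a b : R => (`|a - T| <= `|b - T|)%R) ls) perm_refl.
rewrite -(perm_big _ hp).
rewrite /sort_by_dist.
have : (0 < size (sort (fun a b : R => (`|a - T| <= `|b - T|)%R) ls))%N by rewrite size_sort.
have hin : forall v, v \in sort (fun a b : R => (`|a - T| <= `|b - T|)%R) ls -> v \in ls.
  by move=> v; rewrite mem_sort.
case: (sort _ ls) hin => [//|a s'] hin _.
exists a; split; first by apply: hin; rewrite inE eqxx.
rewrite big_ord_recl big_cons /=.
have -> : \sum_(i < size s') (if (bump 0 i < 1)%N then (a :: s')`_(bump 0 i)
     else if (a :: s')`_(bump 0 i) < T then 0 else M)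
   = \sum_(v <- s') (if v < T then 0 else M).
  rewrite (big_nth 0) big_mkord; apply: eq_bigr => i _.
  by rewrite /bump /=.
lra.
Qed.

Lemma sum_g_L01 (R : realFieldType) (X Theta : Type) (n : nat)
  (x : 'I_n -> X) (y : 'I_n -> R) (f : Theta -> X -> R) (l : R -> R -> R)
  (T M : R)
  (hT : forall th i, l (y i) (f th (x i)) < T <-> 0 < y i * f th (x i)) th :
  \sum_(v <- losses x y f l th) (if v < T then 0 else M) = M *+ L01 x y f th.
Proof.
rewrite /losses big_map big_enum /= /L01 -sumr_const.
rewrite (bigID (fun i => ~~ (0 < y i * f th (x i)))) /=.
rewrite [X in _ + X]big1 ?addr0; last first.
  by move=> i; rewrite negbK => /(hT th i) ->.
apply: eq_big => i; first by rewrite inE.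
move=> hi; case: ifP => // /(hT th i) h; by rewrite h in hi.
Qed.

Theorem lemma4 (R : realFieldType) (X Theta : Type) (n : nat)
  (x : 'I_n -> X) (y : 'I_n -> R) (f : Theta -> X -> R) (l : R -> R -> R)
  (T M : R)
  (hy : forall i, y i = 1 \/ y i = -1)
  (hl0 : forall a b, 0 <= l a b)
  (hT : forall th i, l (y i) (f th (x i)) < T <-> 0 < y i * f th (x i))
  (hM : forall th i, l (y i) (f th (x i)) <= M)
  (thhat : Theta)
  (hmin : forall th, close_k_loss T M 1 (losses x y f l thhat)
                     <= close_k_loss T M 1 (losses x y f l th)) :
  forall th, (L01 x y f thhat <= L01 x y f th)%N.
Proof.
move=> th; rewrite leqNgt; apply/negP => hlt.
have hpos : (0 < L01 x y f thhat)%N by apply: leq_ltn_trans hlt.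
move: (hpos); rewrite /L01 card_gt0 => /set0Pn [i]; rewrite inE => hi.
have hTM : T <= M.
  apply: le_trans (hM thhat i); rewrite leNgt; apply/negP => /(hT thhat i) h.
  by rewrite h in hi.
have hlen : (L01 x y f thhat <= n)%N.
  by rewrite /L01; apply: leq_trans (max_card _) _; rewrite card_ord.
have : (0 < #|~: [set i : 'I_n | ~~ (0 < y i * f th (x i))%R]|)%N.
  have := cardsC [set i : 'I_n | ~~ (0 < y i * f th (x i))].
  rewrite card_ord => hc. rewrite /L01 in hlt hlen. lia.
rewrite card_gt0 => /set0Pn [j]; rewrite !inE negbK => hj.
have hT0 : 0 < T by apply: le_lt_trans (hl0 _ _) (proj2 (hT th j) hj).
have hM0 : 0 < M by apply: lt_le_trans hTM.
have hn : (0 < n)%N by apply: leq_ltn_trans (leq0n j) (ltn_ord j).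
have hsz : forall t, (0 < size (losses x y f l t))%N.
  by move=> t; rewrite /losses size_map -cardE card_ord.
have hbnd : forall t s0, s0 \in losses x y f l t ->
    T - M <= s0 - (if s0 < T then 0 else M) < T.
  move=> t s0 /mapP [k _ ->]; have := hl0 (y k) (f t (x k)); have := hM t k.
  case: ifP => h1 h2 h3; first lra.
  move/negbT: h1; rewrite -leNgt => h1; lra.
have [a [ha ea]] := @close1_decomp R T M _ (hsz thhat).
have [b [hb eb]] := @close1_decomp R T M _ (hsz th).
have := hmin th; rewrite ea eb !sum_g_L01 //.
have := hbnd _ _ ha; have := hbnd _ _ hb.
have := mulrn_wge0 (L01 x y f thhat - (L01 x y f th).+1) (ltW hM0).
rewrite -{2}(subnK hlt) addnS mulrSr mulrnDr.
set A := M *+ (_ - _); set B := M *+ L01 x y f th; lra.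
Qed.
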